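(* For all integers $m\ge2$ and $j\ge0$, \[b_{\mathcal{G}}(m,\overline{m+j})=2q^{\binom{m+1}{2}+\frac{j(j+3)}{2}}{m-2\brack j}.\]
   Context: An overpartition is a partition in which the first occurrence of each part size may be overlined, with parts listed in non-increasing order with respect to $1<\bar1<2<\bar2<\cdots$. A part is of size $t$ if it is $t$ or $\bar t$, and $|\pi|$ is the sum of the sizes of the parts. For $m\ge1$, $\mathcal{G}(m)$ is the set of overpartitions $(\pi_1,\dots,\pi_m)$ such that for every $1\le i<m$, if $\pi_{i+1}$ has size $t$ then $\pi_i\in\{\overline{t+1},\,t+2\}$. $\mathcal{G}_2(m)$ is the subset of $\mathcal{G}(m)$ with smallest part $\pi_m\in\{1,\bar1\}$. $b_{\mathcal{G}}(m,\bar j)$ is $\sum q^{|\pi|}$ over $\pi\in\mathcal{G}_2(m)$ with largest part $\pi_1=\bar j$. The Gaussian binomial is ${M\brack N}=\frac{(q;q)_M}{(q;q)_N(q;q)_{M-N}}$ for $0\le N\le M$ and $0$ otherwise, where $(q;q)_n=\prod_{i=1}^n(1-q^i)$. *)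

(* Defs.v *)
From HB Require Import structures.
From mathcomp Require Import all_boot all_order all_algebra.
From mathcomp Require Import fraction.
Set Implicit Arguments. Unset Strict Implicit. Unset Printing Implicit Defensive.
Import Order.TTheory GRing.Theory Num.Theory.
Local Open Scope ring_scope.

(* A part of an overpartition: (size t, overlined?) ; (t,false) = t, (t,true) = \bar t. *)
Definition opart := (nat * bool)%type.

(* rank for the order 1 < \bar1 < 2 < \bar2 < ... *)
Definition prank (p : opart) : nat := (2 * p.1 + p.2)%N.

(* An overpartition, written as its list of parts (pi_1, ..., pi_m):
   all sizes positive, non-increasing for the order above, and for each size t
   at most one overlined part (necessarily the first occurrence of size t,
   since \bar t comes before t in non-increasing order). *)
Definition is_overpartition (s : seq opart) : bool :=
  [&& all (fun p => 0 < p.1)%N s,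
      sorted (fun x y => prank y <= prank x)%N s &
      all (fun p => count (pred1 (p.1, true)) s <= 1)%N s].

Definition opweight (s : seq opart) : nat := sumn (map fst s).

Definition inG (m : nat) (s : seq opart) : bool :=
  [&& is_overpartition s, size s == m &
      [forall i : 'I_m.-1,
         let t := (nth (0%N, false) s i.+1).1 in
         (nth (0%N, false) s i == (t.+1, true)) ||
         (nth (0%N, false) s i == (t.+2, false))]].

Definition inG2 (m : nat) (s : seq opart) : bool :=
  inG m s && ((nth (0%N, false) s m.-1).1 == 1%N).

Definition tuple_to_seq (m k : nat) (t : m.-tuple ('I_k * bool)) : seq opart :=
  map (fun p => (nat_of_ord p.1, p.2)) t.

(* Every such pi has all part sizes <= j (parts are non-increasing), so it is
   exactly enumerated (injectively) by m-tuples over 'I_(j+1) * bool. *)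
Definition bG (m j : nat) : {poly rat} :=
  \sum_(t : m.-tuple ('I_j.+1 * bool) |
        inG2 m (tuple_to_seq t) && (nth (0%N, false) (tuple_to_seq t) 0 == (j, true)))
     'X^(opweight (tuple_to_seq t)).

Notation RF := {fraction {poly rat}}.
Definition toRF (p : {poly rat}) : RF := @FracField.tofrac {poly rat} p.
Definition qvar : RF := toRF 'X.

Definition qpoch (n : nat) : RF := \prod_(i < n) (1 - qvar ^+ i.+1).

Definition gauss (M N : nat) : RF :=
  if (N <= M)%N then qpoch M / (qpoch N * qpoch (M - N)) else 0.

(* Main.v *)
Require Import Defs.
From HB Require Import structures.
From mathcomp Require Import all_boot all_order all_algebra.
From mathcomp Require Import fraction zify ring.
Import GRing.Theory.
Local Open Scope ring_scope.

Lemma abs (F : fieldType) (c x y u v : F) : x != 0 -> y != 0 -> 1 - u != 0 -> 1 - v != 0 ->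
  c * (1 - u * v) / (x * (1 - u) * (y * (1 - v))) =
  u * (c / (x * (1 - u) * y)) + c / (x * (y * (1 - v))).
Proof. move=> hx hy ha hb. field. by rewrite hx hy ha hb. Qed.

Lemma qvarX k : qvar ^+ k = toRF ('X^k).
Proof. by rewrite /qvar /toRF tofracXn. Qed.

Lemma qfac_neq0 i : 1 - qvar ^+ i.+1 != 0.
Proof.
rewrite qvarX /toRF -tofrac1 -tofracB tofrac_eq0 subr_eq0 eq_sym.
apply/eqP => /(congr1 (size : {poly rat} -> nat)).
by rewrite size_polyXn size_poly1.
Qed.

Lemma qpoch_neq0 n : qpoch n != 0.
Proof. by rewrite /qpoch; apply/prodf_neq0 => i _; apply: qfac_neq0. Qed.

Lemma qpochS n : qpoch n.+1 = qpoch n * (1 - qvar ^+ n.+1).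
Proof. by rewrite /qpoch big_ord_recr. Qed.

Lemma gauss_n0 n : gauss n 0 = 1.
Proof.
rewrite /gauss leq0n subn0 /qpoch big_ord0 mul1r divff //.
exact: qpoch_neq0.
Qed.

Lemma gauss_nn n : gauss n n = 1.
Proof.
rewrite /gauss leqnn subnn /qpoch big_ord0 mulr1 divff //.
exact: qpoch_neq0.
Qed.

Lemma gauss_gt n j : (n < j)%N -> gauss n j = 0.
Proof. by move=> h; rewrite /gauss leqNgt h. Qed.

Lemma gauss_pascal n j :
  gauss n.+1 j.+1 = qvar ^+ j.+1 * gauss n j.+1 + gauss n j.
Proof.
case: (ltngtP j n) => [ltjn|ltnj|->]; last first.
- by rewrite gauss_nn gauss_gt // gauss_nn mulr0 add0r.
- by rewrite !gauss_gt ?mulr0 ?addr0 //; apply: ltnW.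
have [k ->] : exists k, n = (j + k).+1 by exists (n - j.+1)%N; lia.
rewrite /gauss.
have -> : (j.+1 <= (j + k).+2)%N by lia.
have -> : (j.+1 <= (j + k).+1)%N by lia.
have -> : (j <= (j + k).+1)%N by lia.
have -> : ((j + k).+2 - j.+1 = k.+1)%N by lia.
have -> : ((j + k).+1 - j.+1 = k)%N by lia.
have -> : ((j + k).+1 - j = k.+1)%N by lia.
rewrite (qpochS (j+k).+1) (qpochS j) (qpochS k).
have h1 := qpoch_neq0 j; have h2 := qpoch_neq0 k; have h3 := qpoch_neq0 (j+k).+1.
have a1 := qfac_neq0 j; have a2 := qfac_neq0 k.
have -> : qvar ^+ (j + k).+2 = qvar ^+ j.+1 * qvar ^+ k.+1 by rewrite -exprD addSn addnS.
move: h1 h2 a1 a2 h3; move: (qpoch j) (qpoch k) (qpoch (j+k).+1) (qvar ^+ j.+1) (qvar ^+ k.+1) => x y c u v hx hy ha hb _.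
by rewrite (abs RF c x y u v hx hy ha hb).
Qed.

Set Implicit Arguments. Unset Strict Implicit.

Definition d0 : opart := (0%N, false).
Definition step (x : bool) (acc : seq opart) : seq opart :=
  (((head d0 acc).1 + 1 + x)%N, ~~ x) :: acc.
Definition enc (e : seq bool) (b : bool) : seq opart := foldr step [:: (1%N, b)] e.
Fixpoint Wf (e : seq bool) : nat :=
  if e is x :: e' then (Wf e' + (size e' + count id e' + x).+2)%N else 1%N.

Lemma head_enc e b : (head d0 (enc e b)).1 = (1 + size e + count id e)%N.
Proof. elim: e => [//|x e IH] /=; rewrite IH; case: x => /=; lia. Qed.

Lemma size_enc e b : size (enc e b) = (size e).+1.
Proof. by elim: e => [//|x e IH] /=; rewrite IH. Qed.

Lemma weight_enc e b : opweight (enc e b) = Wf e.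
Proof.
elim: e => [|x e IH]; first by rewrite /opweight /= addn0.
rewrite /opweight /= -/(opweight _) IH head_enc; case: x => /=; lia.
Qed.

Lemma enc_inj e b e' b' : enc e b = enc e' b' -> e = e' /\ b = b'.
Proof.
elim: e e' => [|x e IH] [|x' e'] //=.
- by case=> ->.
- by move/(congr1 size) => /=; rewrite size_enc.
- by move/(congr1 size) => /=; rewrite size_enc.
case=> _ /negb_inj -> /IH [-> ->]; done.
Qed.

Definition cond (x y : opart) : bool := (x == (y.1.+1, true)) || (x == (y.1.+2, false)).

Fixpoint chain (s : seq opart) : bool :=
  match s with
  | [::] => false
  | x :: s' => if s' is y :: _ then cond x y && chain s' else x.1 == 1%N
  end.

Lemma chain_enc e b : chain (enc e b).
Proof.
elim: e => [//|x e IH] /=.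
case E: (enc e b) IH => [|y s] //= ->; rewrite andbT /cond.
by case: x; rewrite /= ?addn1 ?addn0 ?eqxx ?orbT.
Qed.

Lemma chain_dec s : chain s -> exists e b, s = enc e b.
Proof.
elim: s => [//|x s IH] /=.
case: s IH => [|y s] IH.
  by case: x => [n b] /= /eqP ->; exists [::], b.
case/andP=> cxy /IH [e [b E]]; rewrite E in cxy *.
have hy : y = head d0 (enc e b) by rewrite -E.
case/orP: cxy => /eqP ->.
- by exists (false :: e), b; rewrite /= /step -hy addn1 addn0.
- exists (true :: e), b; rewrite /= /step -hy; congr ((_, _) :: _); lia.
Qed.

Lemma chain_le_head s : chain s -> all (fun p => p.1 <= (head d0 s).1)%N s.
Proof.
elim: s => [//|x s IH] /=; rewrite leqnn /=.
case: s IH => [|y s] IH; first by [].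
move=> /andP [cxy /IH H].
have lt : (y.1 < x.1)%N by case/orP: cxy => /eqP -> /=.
apply/allP => p ps; have := allP H p ps => /= h; lia.
Qed.

Lemma chain_overp s : chain s -> is_overpartition s.
Proof.
move=> cs; apply/and3P; split.
- elim: s cs => [//|x s IH] /=.
  case: s IH => [|y s] IH; first by move/eqP ->.
  by case/andP=> cxy /IH ->; case/orP: cxy => /eqP ->.
- elim: s cs => [//|x s IH] /=.
  case: s IH => [|y s] IH //= /andP [cxy cs]; apply/andP; split; last exact: IH.
  by rewrite /prank; case/orP: cxy => /eqP -> /=; case: (y.2) => /=; lia.
- elim: s cs => [//|x s IH] /=.
  case: s IH => [|y s] IH; first by move=> _ /=; rewrite andbT addn0 leq_b1.
  case/andP=> cxy cs.
  have lt : (y.1 < x.1)%N by case/orP: cxy => /eqP -> /=.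
  have hb := chain_le_head cs.
  have cnt0 : forall t, (y.1 < t)%N -> count (pred1 (t, true)) (y :: s) = 0%N.
    move=> t lt'; apply/eqP; rewrite -leqn0 leqNgt -has_count; apply/hasP => -[p ps /eqP pe].
    by have := allP hb p ps; rewrite pe /=; lia.
  apply/andP; split.
    by move: (cnt0 _ lt) => /= ->; rewrite addn0 leq_b1.
  apply/allP => p ps /=.
  have := allP (IH cs) p ps; case: eqP => [pe|] /=; last by rewrite add0n.
  by have := allP hb p ps; move: lt; rewrite pe /=; lia.
Qed.

Lemma chain_nth s : chain s <->
  [/\ (0 < size s)%N, (nth d0 s (size s).-1).1 = 1%N &
      forall i, (i.+1 < size s)%N -> cond (nth d0 s i) (nth d0 s i.+1)].
Proof.
elim: s => [|x s IH]; first by split => // -[].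
case: s IH => [|y s] IH.
  by split => [/eqP h|[_ /= -> _]] //; split.
rewrite /=; split.
- case/andP=> cxy /IH [_ h1 h2]; split => //.
  by case=> [|i] //= /h2.
- case=> _ h1 h2; apply/andP; split; first exact: (h2 0%N).
  by apply/IH; split => // i hi; exact: (h2 i.+1).
Qed.

Lemma inG2_chain m s : size s = m -> inG2 m s = chain s.
Proof.
move=> sz; apply/idP/idP.
- case/andP => /and3P [_ _ /forallP H] /eqP hl; apply/chain_nth; split.
  + by move: hl; rewrite -sz; case: (s).
  + by rewrite sz.
  + move=> i hi; have hi' : (i < m.-1)%N by rewrite -sz; lia.
    exact: (H (Ordinal hi')).
- move=> cs; have := chain_nth s; case=> /(_ cs) [h0 h1 h2] _.
  rewrite /inG2 /inG chain_overp //= sz eqxx /=.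
  apply/andP; split; last by rewrite -sz h1.
  apply/forallP => -[i hi] /=; apply: h2; rewrite sz; lia.
Qed.

Fixpoint bitsL n : seq (seq bool) :=
  if n is n'.+1 then [seq x :: e | x <- [:: false; true], e <- bitsL n'] else [:: [::]].

Lemma mem_bitsL n e : (e \in bitsL n) = (size e == n).
Proof.
elim: n e => [|n IH] e; first by case: e.
apply/allpairsP/idP => [[[x e'] [_ /= h ->]]|]; first by rewrite /= eqSS -IH.
case: e => [//|x e] /=; rewrite eqSS -IH => h.
by exists (x, e); split => //; case: x.
Qed.

Lemma uniq_bitsL n : uniq (bitsL n).
Proof.
elim: n => [//|n IH]; apply: (@allpairs_uniq _ _ _ (fun x e => x :: e)) => //.
by move=> [x e] [x' e'] _ _ /= [-> ->].
Qed.

Definition Lj n j := [seq e <- bitsL n | count id e == j].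
Definition R n j := [seq enc (false :: e) b | e <- Lj n j, b <- [:: false; true]].

Lemma uniq_R n j : uniq (R n j).
Proof.
apply: allpairs_uniq => //; first by rewrite filter_uniq // uniq_bitsL.
by move=> [e b] [e' b'] _ _ /= /(congr1 behead) /= /enc_inj [-> ->].
Qed.

Lemma memR_size n j s : s \in R n j -> size s = n.+2.
Proof.
case/allpairsP => -[e b] [/=]; rewrite mem_filter mem_bitsL => /andP [_ /eqP <-] _ ->.
by rewrite (@size_enc (false :: e) b).
Qed.

Lemma memR m j s : (2 <= m)%N -> size s = m ->
  (s \in R (m - 2) j) = chain s && (nth d0 s 0 == ((m + j)%N, true)).
Proof.
move=> m2 sz; apply/idP/idP.
- case/allpairsP => -[e b] [/=]; rewrite mem_filter mem_bitsL => /andP [/eqP ce /eqP se] _ ->.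
  rewrite (@chain_enc (false :: e) b) /= /step /=; apply/eqP; congr (_, _).
  by rewrite head_enc se ce; lia.
- case/andP => /chain_dec [e [b es]]; subst s => hh.
  move: sz; rewrite size_enc; case: e hh => [|x e] hh /= sz; first lia.
  have se : size e = (m - 2)%N by lia.
  move: hh; rewrite /step /=; case: x => /= /eqP [] // h1.
  apply/allpairsP; exists (e, b); split => //=; last by case: (b).
  rewrite mem_filter mem_bitsL se eqxx andbT.
  move: h1; rewrite head_enc se => h1; apply/eqP; lia.
Qed.

Lemma chain_head_bound s : chain s -> all (fun p => p.1 < (head d0 s).1.+1)%N s.
Proof. by move/chain_le_head. Qed.

Lemma bG_R m j : (2 <= m)%N ->
  bG m (m + j) = \sum_(s <- R (m - 2) j) 'X^(opweight s).
Proof.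
move=> m2; rewrite /bG -big_filter.
rewrite -(big_map (@tuple_to_seq m (m + j).+1) xpredT (fun s => 'X^(opweight s))).
apply: perm_big; apply: uniq_perm; last 1 first.
- move=> s; apply/mapP/idP.
  + case=> t; rewrite mem_filter => /andP [Qt _] ->.
    have sz : size (tuple_to_seq t) = m by rewrite /tuple_to_seq size_map size_tuple.
    rewrite memR // -(inG2_chain sz); exact: Qt.
  + move=> hs; have sz := memR_size hs.
    have sz' : size s = m by rewrite sz; lia.
    move: (hs); rewrite (memR _ m2 sz') => /andP [cs hh].
    have hb := chain_head_bound cs.
    have e0 : (head d0 s).1 = (m + j)%N.
      by move: hh; case: (s) => [|x s'] /= /eqP; [rewrite /d0 => -[]|move=> ->].
    rewrite e0 in hb.
    pose s' := map (fun p : opart => ((inord p.1 : 'I_(m + j).+1), p.2)) s.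
    have sz2 : size s' == m by rewrite size_map sz'.
    have ts : tuple_to_seq (Tuple sz2) = s.
      rewrite /tuple_to_seq /= -map_comp -[RHS]map_id; apply/eq_in_map => -[a c] /(allP hb) /= ha.
      by rewrite inordK.
    exists (Tuple sz2) => //.
    rewrite mem_filter mem_index_enum andbT ts.
    by rewrite (inG2_chain sz') cs.
- rewrite map_inj_uniq ?filter_uniq ?index_enum_uniq //.
  move=> t1 t2; rewrite /tuple_to_seq => /inj_map h; apply: val_inj; apply: h.
  by move=> [a b] [c d] /= [/val_inj -> ->].
- exact: uniq_R.
Qed.

Definition P n j : {poly rat} :=
  \sum_(e <- bitsL n) (if count id e == j then 'X^(Wf e) else 0).

Lemma sumR n j : \sum_(s <- R n j) 'X^(opweight s) = 2%:R * 'X^((n + j).+2) * P n j.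
Proof.
rewrite /R big_allpairs_dep /P /Lj big_filter big_mkcond mulr_sumr.
apply: eq_big_seq => e; rewrite mem_bitsL => /eqP se.
case: eqP => [ce|_]; last by rewrite mulr0.
rewrite big_cons big_seq1 !weight_enc /= se ce addn0 exprD.
by rewrite -mulrA mulr_natl mulr2n mulrC.
Qed.

Lemma P0 j : P 0 j = if j == 0%N then 'X else 0.
Proof. by rewrite /P /= big_cons big_nil addr0 expr1; case: j. Qed.

Lemma PS n j : P n.+1 j = 'X^(n + 2 + j) * (P n j + (if j is j'.+1 then P n j' else 0)).
Proof.
rewrite /P (_ : bitsL n.+1 = [seq x :: e | x <- [:: false; true], e <- bitsL n]) //.
rewrite big_allpairs_dep big_cons big_seq1 mulrDr.
congr (_ + _).
- rewrite mulr_sumr; apply: eq_big_seq => e; rewrite mem_bitsL => /eqP se /=.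
  rewrite add0n; case: eqP => [ce|_]; last by rewrite mulr0.
  by rewrite se ce -exprD; congr ('X^_); lia.
- case: j => [|j].
    by rewrite mulr0; apply: big1 => e _ /=.
  rewrite mulr_sumr; apply: eq_big_seq => e; rewrite mem_bitsL => /eqP se /=.
  rewrite add1n eqSS; case: eqP => [ce|_]; last by rewrite mulr0.
  by rewrite se ce -exprD; congr ('X^_); lia.
Qed.

Lemma binS2 k : 'C(k.+1, 2) = ('C(k, 2) + k)%N.
Proof. by rewrite binS bin1. Qed.

Lemma gen1 (K : comNzRingType) (x g1 g0 : K) a c d :
  x ^+ c * (x ^+ (a + d) * g1 + x ^+ a * g0) = x ^+ (a + c) * (x ^+ d * g1 + g0).
Proof. rewrite !exprD. ring. Qed.

Lemma toRF_X k : toRF ('X^k) = qvar ^+ k.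
Proof. by rewrite qvarX. Qed.

Lemma Pgauss n j : toRF (P n j) = qvar ^+ ('C(n.+2, 2) + 'C(j.+1, 2)) * gauss n j.
Proof.
elim: n j => [|n IH] j.
  rewrite P0; case: j => [|j] /=.
    by rewrite gauss_n0 mulr1 /toRF /qvar.
  by rewrite gauss_gt // mulr0 /toRF tofrac0.
rewrite PS /toRF tofracM tofracD -/(toRF _) -/(toRF (P n j)) IH toRF_X.
case: j => [|j].
  rewrite /toRF tofrac0 addr0 !gauss_n0 !mulr1 -exprD; congr (_ ^+ _).
  rewrite (binS2 n.+2); lia.
rewrite -/(toRF (P n j)) IH gauss_pascal.
have -> : ('C(n.+2, 2) + 'C(j.+2, 2) = ('C(n.+2, 2) + 'C(j.+1, 2)) + j.+1)%N by rewrite (binS2 j.+1); lia.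
have -> : ('C(n.+3, 2) + 'C(j.+2, 2) = ('C(n.+2, 2) + 'C(j.+1, 2)) + (n + 2 + j.+1))%N.
  by rewrite (binS2 j.+1) (binS2 n.+2); lia.
exact: gen1.
Qed.

Lemma bin2_half j : (j * (j + 3) %/ 2 = 'C(j.+1, 2) + j)%N.
Proof.
have h : (2 * 'C(j.+1, 2) = j.+1 * j)%N.
  elim: j => [//|j IH]; rewrite binS2 mulnDr IH; lia.
have -> : (j * (j + 3) = 2 * ('C(j.+1, 2) + j))%N by rewrite [RHS]mulnDr h; lia.
by rewrite mulKn.
Qed.

Lemma toRF3 k p : toRF (2%:R * 'X^k * p) = 2%:R * qvar ^+ k * toRF p.
Proof.
rewrite /toRF tofracM tofracM -/(toRF 'X^k) toRF_X.
by rewrite rmorph_nat.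
Qed.

Theorem mainTheorem14 (m j : nat) : (2 <= m)%N ->
  toRF (bG m (m + j)) =
    2%:R * qvar ^+ ('C(m.+1, 2) + (j * (j + 3)) %/ 2)%N * gauss (m - 2) j.
Proof.
case: m => [|[|n]] // _.
rewrite bG_R // sumR toRF3.
have -> : (n.+2 - 2 = n)%N by lia.
rewrite Pgauss.
rewrite mulrA -(mulrA 2%:R) -exprD bin2_half.
congr (_ * _ ^+ _ * _).
rewrite (binS2 n.+2); lia.
Qed.
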